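(* Let $(p_{ij})_{i,j\in\{0,1\}}$ be a transition matrix with all $p_{ij}\in(0,1)$, and for $i\in\{0,1\}$, $n\in\mathbb N_0$ let $I_n^i$ be binomially $B(n,p_{i0})$ distributed. Let $(a_i(n))_{n\in\mathbb N_0}$, $(\varepsilon_i(n))_{n\in\mathbb N_0}$, $i\in\{0,1\}$, be real sequences satisfying $$a_i(n)=p_{i0}\mathbb E[a_0(I_n^i)]+p_{i1}\mathbb E[a_1(n-I_n^i)]+\varepsilon_i(n),\qquad i\in\{0,1\},\ n\in\mathbb N.$$ If $\varepsilon_i(n)=O(n^\alpha)$ for some $\alpha\in\mathbb R$ and both $i$, then as $n\to\infty$, $a_i(n)=O(1)$ if $\alpha<0$, $a_i(n)=O(n^\alpha)$ if $\alpha>0$, and $a_i(n)=O(\log n)$ if $\alpha=0$. *)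

(* Defs.v *)
From Stdlib Require Import Reals.
Open Scope R_scope.

Definition binom_exp (n : nat) (q : R) (f : nat -> R) : R :=
  sum_f_R0 (fun k => Binomial.C n k * q ^ k * (1 - q) ^ (n - k) * f k) n.

Definition bigO (f g : nat -> R) : Prop :=
  exists (C : R) (N : nat), forall n : nat, (N <= n)%nat -> Rabs (f n) <= C * Rabs (g n).

(* Main.v *)
Require Import Defs.
From Stdlib Require Import Reals Lra Lia.
Open Scope R_scope.

Definition w (n : nat) (q : R) (k : nat) : R :=
  Binomial.C n k * q ^ k * (1 - q) ^ (n - k).

Lemma binom_exp_w n q f : binom_exp n q f = sum_f_R0 (fun k => w n q k * f k) n.
Proof. reflexivity. Qed.

Lemma C_pos n k : 0 < Binomial.C n k.
Proof.
  unfold Binomial.C. apply Rdiv_lt_0_compat. apply INR_fact_lt_0.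
  apply Rmult_lt_0_compat; apply INR_fact_lt_0.
Qed.

Lemma w_nonneg n q k : 0 <= q <= 1 -> 0 <= w n q k.
Proof.
  intros Hq. unfold w. apply Rmult_le_pos. apply Rmult_le_pos.
  left; apply C_pos. apply pow_le; lra. apply pow_le; lra.
Qed.

Lemma sum_w n q : sum_f_R0 (fun k => w n q k) n = 1.
Proof.
  unfold w. rewrite <- Binomial.binomial. replace (q + (1 - q)) with 1 by ring.
  apply pow1.
Qed.

Lemma C_shift n j : (j <= n)%nat ->
  Binomial.C (S n) (S j) * INR (S j) = INR (S n) * Binomial.C n j.
Proof.
  intros Hj. unfold Binomial.C. replace (S n - S j)%nat with (n - j)%nat by lia.
  rewrite !fact_simpl, !mult_INR.
  assert (H1 := INR_fact_neq_0 j). assert (H2 := INR_fact_neq_0 (n - j)).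
  assert (H3 : INR (S j) <> 0) by (apply not_0_INR; lia).
  field. auto.
Qed.

Lemma w_shift n q j : (j <= n)%nat ->
  w (S n) q (S j) * INR (S j) = INR (S n) * q * w n q j.
Proof.
  intros Hj. unfold w. replace (S n - S j)%nat with (n - j)%nat by lia.
  assert (H := C_shift n j Hj).
  transitivity ((Binomial.C (S n) (S j) * INR (S j)) * q * q ^ j * (1 - q) ^ (n - j)).
  simpl; ring. rewrite H; ring.
Qed.

Lemma shift_sum n q h :
  sum_f_R0 (fun k => w (S n) q k * (INR k * h (k - 1)%nat)) (S n)
  = INR (S n) * q * sum_f_R0 (fun j => w n q j * h j) n.
Proof.
  rewrite decomp_sum by lia. simpl pred. simpl INR at 1.
  rewrite Rmult_0_l, Rmult_0_r, Rplus_0_l.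
  rewrite scal_sum. apply sum_eq. intros j Hj.
  replace (S j - 1)%nat with j by lia.
  rewrite <- Rmult_assoc, w_shift by lia. ring.
Qed.

Lemma mean n q : sum_f_R0 (fun k => w n q k * INR k) n = INR n * q.
Proof.
  destruct n as [|n].
  - simpl. ring.
  - transitivity (sum_f_R0 (fun k => w (S n) q k * (INR k * (fun _ => 1) (k - 1)%nat)) (S n)).
    apply sum_eq; intros; ring.
    transitivity (INR (S n) * q * sum_f_R0 (fun j => w n q j * 1) n).
    apply (shift_sum n q (fun _ => 1)).
    transitivity (INR (S n) * q * sum_f_R0 (fun j => w n q j) n).
    f_equal. apply sum_eq; intros; ring. rewrite sum_w; ring.
Qed.

Lemma var n q : sum_f_R0 (fun k => w n q k * (INR k - INR n * q) ^ 2) n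
  = INR n * q * (1 - q).
Proof.
  destruct n as [|n].
  - simpl. unfold w. simpl. unfold Binomial.C. simpl. field.
  - set (m := INR (S n) * q).
    transitivity (sum_f_R0 (fun k => w (S n) q k * (INR k * INR (k - 1)%nat)) (S n)
      + (1 - 2 * m) * sum_f_R0 (fun k => w (S n) q k * INR k) (S n)
      + m ^ 2 * sum_f_R0 (fun k => w (S n) q k) (S n)).
    + rewrite !scal_sum, <- !plus_sum. apply sum_eq. intros k Hk.
      destruct k as [|k].
      * simpl. ring.
      * replace (S k - 1)%nat with k by lia. rewrite S_INR. ring.
    + rewrite shift_sum, mean, mean, sum_w. unfold m. rewrite S_INR. ring.
Qed.

Lemma pointwise (h A B x m d : R) : 0 < d -> A <= B ->
  (Rabs (x - m) < d -> h <= A) -> h <= B ->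
  h <= A + (B - A) * ((x - m) ^ 2 / d ^ 2).
Proof.
  intros Hd HAB H1 H2.
  destruct (Rlt_or_le (Rabs (x - m)) d) as [Hl|Hl].
  - specialize (H1 Hl). assert (0 <= (B - A) * ((x - m) ^ 2 / d ^ 2)).
    { apply Rmult_le_pos. lra. apply Rmult_le_pos. apply pow2_ge_0.
      left; apply Rinv_0_lt_compat; apply pow_lt; lra. }
    lra.
  - assert (Hx : d ^ 2 <= (x - m) ^ 2).
    { rewrite <- (pow2_abs (x - m)). apply pow_incr. lra. }
    assert (1 <= (x - m) ^ 2 / d ^ 2).
    { apply (Rmult_le_reg_r (d ^ 2)). apply pow_lt; lra.
      unfold Rdiv. rewrite Rmult_assoc, Rinv_l. lra. apply pow_nonzero; lra. }
    nra.
Qed.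

Lemma split_bound n q (h : nat -> R) A B d : 0 <= q <= 1 -> 0 < d -> A <= B ->
  (forall k, (k <= n)%nat -> Rabs (INR k - INR n * q) < d -> h k <= A) ->
  (forall k, (k <= n)%nat -> h k <= B) ->
  sum_f_R0 (fun k => w n q k * h k) n <= A + (B - A) * (INR n * q * (1 - q)) / d ^ 2.
Proof.
  intros Hq Hd HAB H1 H2.
  apply Rle_trans with (sum_f_R0 (fun k => w n q k * A + w n q k * (INR k - INR n * q) ^ 2 * ((B - A) / d ^ 2)) n).
  - apply sum_Rle. intros k Hk.
    assert (P := pointwise (h k) A B (INR k) (INR n * q) d Hd HAB (H1 k Hk) (H2 k Hk)).
    assert (W := w_nonneg n q k Hq).
    apply Rle_trans with (w n q k * (A + (B - A) * ((INR k - INR n * q) ^ 2 / d ^ 2))).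
    apply Rmult_le_compat_l; auto. right; unfold Rdiv; ring.
  - rewrite plus_sum, <- scal_sum, <- scal_sum, sum_w, var. right. unfold Rdiv. ring.
Qed.

Definition G (al x : R) : R := if Req_dec_T al 0 then ln x else Rpower x al / al.
Definition phi al x := G al x - G al 1.

Lemma ln_le' x y : 0 < x -> x <= y -> ln x <= ln y.
Proof. intros Hx [H|H]. left; apply ln_increasing; auto. subst; lra. Qed.

Lemma exp_le' x y : x <= y -> exp x <= exp y.
Proof. intros [H|H]. left; apply exp_increasing; auto. subst; lra. Qed.

Lemma G_mono al x y : 0 < x -> x <= y -> G al x <= G al y.
Proof.
  intros Hx Hxy. unfold G. destruct (Req_dec_T al 0).
  - apply ln_le'; auto.
  - unfold Rpower. assert (L := ln_le' x y Hx Hxy).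
    destruct (Rlt_or_le al 0) as [Ha|Ha].
    + assert (exp (al * ln y) <= exp (al * ln x)) by (apply exp_le'; nra).
      unfold Rdiv. assert (/ al < 0) by (apply Rinv_lt_0_compat; auto). nra.
    + assert (Ha' : 0 < al) by lra.
      assert (exp (al * ln x) <= exp (al * ln y)) by (apply exp_le'; nra).
      unfold Rdiv. apply Rmult_le_compat_r; auto. left; apply Rinv_0_lt_compat; auto.
Qed.

Lemma Rpower_1_base al : Rpower 1 al = 1.
Proof. unfold Rpower. rewrite ln_1, Rmult_0_r. apply exp_0. Qed.

Lemma G_mult al x y : 0 < x -> 0 < y ->
  G al (x * y) = G al y + Rpower y al * phi al x.
Proof.
  intros Hx Hy. unfold phi, G. destruct (Req_dec_T al 0) as [e|e].
  - subst. rewrite Rpower_O, ln_mult, ln_1 by auto. ring.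
  - rewrite <- Rpower_mult_distr, Rpower_1_base by auto. field. auto.
Qed.

Lemma phi_neg al x : 0 < x < 1 -> phi al x < 0.
Proof.
  intros Hx. unfold phi, G. destruct (Req_dec_T al 0) as [e|e].
  - rewrite ln_1. assert (ln x < ln 1) by (apply ln_increasing; lra). rewrite ln_1 in H. lra.
  - rewrite Rpower_1_base. unfold Rpower.
    assert (L : ln x < 0) by (rewrite <- ln_1; apply ln_increasing; lra).
    destruct (Rlt_or_le al 0) as [Ha|Ha].
    + assert (exp 0 < exp (al * ln x)) by (apply exp_increasing; nra). rewrite exp_0 in H.
      assert (/ al < 0) by (apply Rinv_lt_0_compat; auto).
      unfold Rdiv. nra.
    + assert (Ha' : 0 < al) by lra.
      assert (exp (al * ln x) < exp 0) by (apply exp_increasing; nra). rewrite exp_0 in H.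
      assert (0 < / al) by (apply Rinv_0_lt_compat; auto).
      unfold Rdiv. nra.
Qed.

Lemma Rpower_pos x al : 0 < Rpower x al.
Proof. unfold Rpower. apply exp_pos. Qed.

Lemma INR_pos1 k : 0 < INR k + 1.
Proof. assert (H := pos_INR k). lra. Qed.

Lemma analytic al q : 0 < q < 1 -> exists c, 0 < c /\ exists N, (1 <= N)%nat /\
  forall n, (N <= n)%nat ->
  q * sum_f_R0 (fun k => w n q k * G al (INR k + 1)) n
  + (1 - q) * sum_f_R0 (fun k => w n q k * G al (INR (n - k) + 1)) n
  <= G al (INR n + 1) - c * Rpower (INR n + 1) al.
Proof.
  intros Hq.
  set (dl := Rmin q (1 - q) / 4).
  assert (Hd1 : dl <= q / 4) by (unfold dl; assert (H := Rmin_l q (1-q)); lra).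
  assert (Hd2 : dl <= (1 - q) / 4) by (unfold dl; assert (H := Rmin_r q (1-q)); lra).
  assert (Hd0 : 0 < dl) by (unfold dl; apply Rmin_case; lra).
  set (c0 := - (q * phi al (q + 2 * dl) + (1 - q) * phi al (1 - q + 2 * dl))).
  assert (Hc0 : 0 < c0).
  { unfold c0. assert (phi al (q + 2 * dl) < 0) by (apply phi_neg; lra).
    assert (phi al (1 - q + 2 * dl) < 0) by (apply phi_neg; lra). nra. }
  set (S := q * (- phi al (q + dl)) + (1 - q) * (- phi al (1 - q + dl))).
  assert (HS : 0 <= S).
  { unfold S. assert (phi al (q + dl) < 0) by (apply phi_neg; lra).
    assert (phi al (1 - q + dl) < 0) by (apply phi_neg; lra). nra. }
  set (Kc := q * (1 - q) / dl ^ 2).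
  assert (HKc : 0 <= Kc).
  { unfold Kc. apply Rmult_le_pos. nra. left; apply Rinv_0_lt_compat, pow_lt; lra. }
  destruct (INR_unbounded (/ dl + 2 * Kc * S / c0 + 1)) as [N HN].
  exists (c0 / 2). split. lra. exists N.
  assert (Hinvd : 0 < / dl) by (apply Rinv_0_lt_compat; lra).
  assert (HKS : 0 <= 2 * Kc * S / c0).
  { unfold Rdiv. apply Rmult_le_pos. nra. left; apply Rinv_0_lt_compat; lra. }
  split.
  { assert (0 < INR N) by lra. destruct N. simpl in H; lra. lia. }
  intros n Hn.
  set (x := INR n).
  assert (Hx : INR N <= x) by (apply le_INR; auto).
  assert (Hx0 : 0 < x) by lra.
  assert (Hdx : 1 <= dl * x).
  { assert (/ dl <= x) by lra.
    apply Rmult_le_compat_l with (r := dl) in H; [|lra].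
    rewrite Rinv_r in H; lra. }
  set (P := Rpower (x + 1) al).
  assert (HP : 0 < P) by apply Rpower_pos.
  set (B := G al (x + 1)).
  set (A1 := G al ((q + dl) * x + 1)).
  set (A2 := G al ((1 - q + dl) * x + 1)).
  set (r := x * q * (1 - q) / (dl * x) ^ 2).
  assert (Hr : r = Kc / x).
  { unfold r, Kc. field. lra. }
  assert (Hr0 : 0 <= r).
  { rewrite Hr. apply Rmult_le_pos; auto. left; apply Rinv_0_lt_compat; auto. }
  assert (HdxP : 0 < dl * x) by lra.
  assert (E1 : sum_f_R0 (fun k => w n q k * G al (INR k + 1)) n <= A1 + (B - A1) * r).
  { eapply Rle_trans; [apply split_bound with (d := dl * x) (A := A1) (B := B)
       | right; unfold r, x, Rdiv; ring]; auto; try lra.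
    - apply G_mono; nra.
    - intros k Hk Hab. apply Rabs_def2 in Hab. apply G_mono. apply INR_pos1. fold x in Hab. nra.
    - intros k Hk. apply G_mono. apply INR_pos1. apply le_INR in Hk. fold x in Hk. lra. }
  assert (E2 : sum_f_R0 (fun k => w n q k * G al (INR (n - k) + 1)) n <= A2 + (B - A2) * r).
  { eapply Rle_trans; [apply split_bound with (d := dl * x) (A := A2) (B := B)
       | right; unfold r, x, Rdiv; ring]; auto; try lra.
    - apply G_mono; nra.
    - intros k Hk Hab. apply Rabs_def2 in Hab. apply G_mono. apply INR_pos1.
      rewrite minus_INR by auto. fold x in Hab |- *. nra.
    - intros k Hk. apply G_mono. apply INR_pos1. rewrite minus_INR by auto.
      assert (H := pos_INR k). fold x. lra. }
  assert (F1 : A1 <= B + P * phi al (q + 2 * dl)).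
  { unfold B, P. rewrite <- G_mult by lra. apply G_mono; nra. }
  assert (F2 : A2 <= B + P * phi al (1 - q + 2 * dl)).
  { unfold B, P. rewrite <- G_mult by lra. apply G_mono; nra. }
  assert (F3 : B + P * phi al (q + dl) <= A1).
  { unfold B, P. rewrite <- G_mult by lra. apply G_mono; nra. }
  assert (F4 : B + P * phi al (1 - q + dl) <= A2).
  { unfold B, P. rewrite <- G_mult by lra. apply G_mono; nra. }
  assert (Hrs : r * S <= c0 / 2).
  { rewrite Hr. assert (2 * Kc * S / c0 <= x) by lra.
    apply Rmult_le_compat_r with (r := c0 / (2 * x)) in H.
    2:{ apply Rmult_le_pos; [lra|]. left; apply Rinv_0_lt_compat; lra. }
    replace (2 * Kc * S / c0 * (c0 / (2 * x))) with (Kc / x * S) in H by (field; lra).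
    replace (x * (c0 / (2 * x))) with (c0 / 2) in H by (field; lra). lra. }
  assert (G1 : q * (B - A1) * r <= q * (P * - phi al (q + dl)) * r).
  { apply Rmult_le_compat_r; auto. apply Rmult_le_compat_l; lra. }
  assert (G2 : (1 - q) * (B - A2) * r <= (1 - q) * (P * - phi al (1 - q + dl)) * r).
  { apply Rmult_le_compat_r; auto. apply Rmult_le_compat_l; lra. }
  assert (G3 : P * (r * S) <= P * (c0 / 2)) by (apply Rmult_le_compat_l; lra).
  fold x B.
  assert (q * sum_f_R0 (fun k => w n q k * G al (INR k + 1)) n <= q * (A1 + (B - A1) * r))
    by (apply Rmult_le_compat_l; lra).
  assert ((1 - q) * sum_f_R0 (fun k => w n q k * G al (INR (n - k) + 1)) n <= (1 - q) * (A2 + (B - A2) * r))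
    by (apply Rmult_le_compat_l; lra).
  unfold c0, S in *.
  nra.
Qed.

Lemma sum_ind_pt n q j d : (j <= n)%nat ->
  sum_f_R0 (fun k => w n q k * (if Nat.eqb k j then d else 0)) n = w n q j * d.
Proof.
  intros Hj.
  assert (H : forall m, sum_f_R0 (fun k => w n q k * (if Nat.eqb k j then d else 0)) m
    = if Nat.leb j m then w n q j * d else 0).
  { induction m.
    - change (sum_f_R0 ?f 0) with (f 0%nat). cbv beta. destruct j; simpl; ring.
    - rewrite tech5, IHm. destruct (Nat.eqb_spec (S m) j); destruct (Nat.leb_spec j m);
      destruct (Nat.leb_spec j (S m)); subst; try lia; simpl; try ring. }
  rewrite H. destruct (Nat.leb_spec j n); [ring|lia].
Qed.

Lemma bound_ind n q (h g : nat -> R) j d : 0 <= q <= 1 -> (j <= n)%nat ->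
  (forall k, (k <= n)%nat -> h k <= g k + (if Nat.eqb k j then d else 0)) ->
  sum_f_R0 (fun k => w n q k * h k) n <= sum_f_R0 (fun k => w n q k * g k) n + w n q j * d.
Proof.
  intros Hq Hj H. rewrite <- sum_ind_pt by auto. rewrite <- plus_sum.
  apply sum_Rle. intros k Hk. rewrite <- Rmult_plus_distr_l.
  apply Rmult_le_compat_l. apply w_nonneg; auto. auto.
Qed.

Lemma w_n n q : w n q n = q ^ n.
Proof.
  unfold w, Binomial.C. rewrite Nat.sub_diag. simpl.
  assert (H := INR_fact_neq_0 n). field. auto.
Qed.

Lemma w_0 n q : w n q 0 = (1 - q) ^ n.
Proof.
  unfold w, Binomial.C. rewrite Nat.sub_0_r. simpl.
  assert (H := INR_fact_neq_0 n). field. auto.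
Qed.

Lemma sum_lin n q (F : nat -> R) a b :
  sum_f_R0 (fun k => w n q k * (a * F k + b)) n
  = a * sum_f_R0 (fun k => w n q k * F k) n + b.
Proof.
  transitivity (sum_f_R0 (fun k => w n q k * F k * a + w n q k * b) n).
  apply sum_eq; intros; ring.
  rewrite plus_sum, <- scal_sum, <- scal_sum, sum_w. ring.
Qed.

Lemma sum_abs n q (h : nat -> R) : 0 <= q <= 1 ->
  Rabs (sum_f_R0 (fun k => w n q k * h k) n) <= sum_f_R0 (fun k => w n q k * Rabs (h k)) n.
Proof.
  intros Hq. eapply Rle_trans. apply Rsum_abs. right. apply sum_eq. intros k Hk.
  rewrite Rabs_mult, (Rabs_pos_eq (w n q k)) by (apply w_nonneg; auto). auto.
Qed.

Lemma pow_le_q q n : 0 <= q <= 1 -> (1 <= n)%nat -> q ^ n <= q.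
Proof.
  intros Hq Hn. induction n. lia.
  destruct n. simpl; lra.
  assert (q ^ S n <= q) by (apply IHn; lia).
  simpl in *. assert (0 <= q * q ^ n) by (apply Rmult_le_pos; [lra|apply pow_le; lra]). nra.
Qed.

Lemma contr_lt1 q n : 0 < q < 1 -> (1 <= n)%nat -> q ^ S n + (1 - q) ^ S n < 1.
Proof.
  intros Hq Hn. simpl.
  assert (q ^ n <= q) by (apply pow_le_q; auto; lra).
  assert ((1 - q) ^ n <= 1 - q) by (apply pow_le_q; auto; lra).
  nra.
Qed.

Lemma term_le_sum (u : nat -> R) N n : (forall k, 0 <= u k) -> (n <= N)%nat ->
  u n <= sum_f_R0 u N.
Proof.
  intros Hu Hn. induction N.
  - replace n with 0%nat by lia. simpl; lra.
  - rewrite tech5. destruct (Nat.eq_dec n (S N)).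
    + subst. assert (0 <= sum_f_R0 u N) by (apply cond_pos_sum; auto). lra.
    + assert (u n <= sum_f_R0 u N) by (apply IHN; lia). specialize (Hu (S N)). lra.
Qed.

Lemma pow_ratio al x : 1 <= x ->
  Rpower x al <= exp (Rabs al * ln 2) * Rpower (x + 1) al.
Proof.
  intros Hx. unfold Rpower. rewrite <- exp_plus. apply exp_le'.
  assert (L1 : ln x <= ln (x + 1)) by (apply ln_le'; lra).
  assert (L2 : ln (x + 1) <= ln 2 + ln x).
  { rewrite <- ln_mult by lra. apply ln_le'; lra. }
  destruct (Rle_or_lt 0 al).
  - rewrite Rabs_pos_eq by auto.
    assert (0 <= ln 2) by (rewrite <- ln_1; apply ln_le'; lra). nra.
  - rewrite Rabs_left by auto. nra.
Qed.

Theorem lemma4p3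
  (p : nat -> nat -> R)
  (Hp : forall i j : nat, (i < 2)%nat -> (j < 2)%nat -> 0 < p i j < 1)
  (Hrow : forall i : nat, (i < 2)%nat -> p i 0%nat + p i 1%nat = 1)
  (a eps : nat -> nat -> R)
  (Hrec : forall i n : nat, (i < 2)%nat -> (1 <= n)%nat ->
     a i n = p i 0%nat * binom_exp n (p i 0%nat) (fun k => a 0%nat k)
           + p i 1%nat * binom_exp n (p i 0%nat) (fun k => a 1%nat (n - k)%nat)
           + eps i n)
  (alpha : R)
  (Heps : forall i : nat, (i < 2)%nat -> bigO (eps i) (fun n => Rpower (INR n) alpha)) :
  forall i : nat, (i < 2)%nat ->
    (alpha < 0 -> bigO (a i) (fun _ => 1)) /\
    (alpha > 0 -> bigO (a i) (fun n => Rpower (INR n) alpha)) /\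
    (alpha = 0 -> bigO (a i) (fun n => ln (INR n))).
Proof.
  assert (Hq : forall i, (i < 2)%nat -> 0 < p i 0%nat < 1) by (intros; apply Hp; lia).
  assert (Hp1 : forall i, (i < 2)%nat -> p i 1%nat = 1 - p i 0%nat)
    by (intros i Hi; specialize (Hrow i Hi); lra).
  destruct (analytic alpha (p 0%nat 0%nat) (Hq 0%nat ltac:(lia))) as [c0 [Hc0 [N0 [HN0 HA0]]]].
  destruct (analytic alpha (p 1%nat 0%nat) (Hq 1%nat ltac:(lia))) as [c1 [Hc1 [N1 [HN1 HA1]]]].
  destruct (Heps 0%nat ltac:(lia)) as [K0 [Ne0 HE0]].
  destruct (Heps 1%nat ltac:(lia)) as [K1 [Ne1 HE1]].
  set (c := Rmin c0 c1).
  assert (Hc : 0 < c) by (unfold c; apply Rmin_case; lra).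
  set (Kp := Rmax (Rmax K0 K1) 0).
  assert (HKp : 0 <= Kp) by apply Rmax_r.
  assert (HK0 : K0 <= Kp).
  { unfold Kp. eapply Rle_trans; [apply (Rmax_l K0 K1)|apply Rmax_l]. }
  assert (HK1 : K1 <= Kp).
  { unfold Kp. eapply Rle_trans; [apply (Rmax_r K0 K1)|apply Rmax_l]. }
  set (M2 := exp (Rabs alpha * ln 2)).
  assert (HM2 : 0 < M2) by apply exp_pos.
  set (Nb := (N0 + N1 + Ne0 + Ne1 + 1)%nat).
  assert (HA : forall i n, (i < 2)%nat -> (Nb <= n)%nat ->
    p i 0%nat * sum_f_R0 (fun k => w n (p i 0%nat) k * G alpha (INR k + 1)) n
    + (1 - p i 0%nat) * sum_f_R0 (fun k => w n (p i 0%nat) k * G alpha (INR (n - k) + 1)) n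
    <= G alpha (INR n + 1) - c * Rpower (INR n + 1) alpha).
  { intros i n Hi Hn. assert (HP := Rpower_pos (INR n + 1) alpha).
    destruct i as [|[|i]]; [ | | lia ].
    - eapply Rle_trans. apply HA0. unfold Nb in Hn; lia.
      assert (c <= c0) by apply Rmin_l. nra.
    - eapply Rle_trans. apply HA1. unfold Nb in Hn; lia.
      assert (c <= c1) by apply Rmin_r. nra. }
  set (Cc := Kp * M2 / c).
  assert (HCc : 0 <= Cc).
  { unfold Cc. apply Rmult_le_pos. apply Rmult_le_pos; lra. left; apply Rinv_0_lt_compat; lra. }
  assert (HE : forall i n, (i < 2)%nat -> (Nb <= n)%nat ->
    Rabs (eps i n) <= Cc * (c * Rpower (INR n + 1) alpha)).
  { intros i n Hi Hn.
    assert (H1 : Rabs (eps i n) <= Kp * Rpower (INR n) alpha).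
    { rewrite <- (Rabs_pos_eq (Rpower (INR n) alpha)) by (left; apply Rpower_pos).
      assert (0 <= Rabs (Rpower (INR n) alpha)) by apply Rabs_pos.
      destruct i as [|[|i]]; [ | | lia ].
      - eapply Rle_trans. apply HE0. unfold Nb in Hn; lia.
        apply Rmult_le_compat_r; auto.
      - eapply Rle_trans. apply HE1. unfold Nb in Hn; lia.
        apply Rmult_le_compat_r; auto. }
    assert (H2 : Rpower (INR n) alpha <= M2 * Rpower (INR n + 1) alpha).
    { apply pow_ratio. apply (le_INR 1). unfold Nb in Hn; lia. }
    replace (Cc * (c * Rpower (INR n + 1) alpha)) with (Kp * (M2 * Rpower (INR n + 1) alpha))
      by (unfold Cc; field; lra).
    eapply Rle_trans. apply H1. apply Rmult_le_compat_l; auto. }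
  set (u := fun n => Rmax (Rabs (a 0%nat n)) (Rabs (a 1%nat n))).
  assert (Hu0 : forall n, 0 <= u n).
  { intros n. unfold u. eapply Rle_trans; [apply Rabs_pos|apply Rmax_l]. }
  set (Mb := sum_f_R0 u Nb).
  set (C0 := Mb - Cc * G alpha 1).
  set (f := fun n => Cc * G alpha (INR n + 1) + C0).
  assert (Hclaim : forall n, u n <= f n).
  { intros n. induction n as [n IH] using Wf_nat.lt_wf_ind.
    destruct (Compare_dec.le_lt_dec n Nb) as [Hn|Hn].
    - assert (u n <= Mb) by (apply term_le_sum; auto).
      assert (G alpha 1 <= G alpha (INR n + 1)).
      { apply G_mono. lra. assert (Hpn := pos_INR n). lra. }
      unfold f, C0. nra.
    - set (d := u n - f n).
      assert (Hn1 : (1 <= n)%nat) by (unfold Nb in Hn; lia).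
      assert (Step : forall i, (i < 2)%nat ->
        Rabs (a i n) <= f n + d * (p i 0%nat ^ S n + (1 - p i 0%nat) ^ S n)).
      { intros i Hi. set (q := p i 0%nat).
        assert (Hqi : 0 < q < 1) by (apply Hq; auto).
        assert (Hqi' : 0 <= q <= 1) by lra.
        rewrite (Hrec i n Hi Hn1), (Hp1 i Hi), !binom_exp_w. fold q.
        assert (B1 : sum_f_R0 (fun k => w n q k * Rabs (a 0%nat k)) n
                    <= sum_f_R0 (fun k => w n q k * f k) n + w n q n * d).
        { apply bound_ind; auto. intros k Hk.
          destruct (Nat.eqb_spec k n).
          - subst k. unfold d. assert (Rabs (a 0%nat n) <= u n) by apply Rmax_l. lra.
          - assert (u k <= f k) by (apply IH; lia).
            assert (Rabs (a 0%nat k) <= u k) by apply Rmax_l. lra. }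
        assert (B2 : sum_f_R0 (fun k => w n q k * Rabs (a 1%nat (n - k)%nat)) n
                    <= sum_f_R0 (fun k => w n q k * f (n - k)%nat) n + w n q 0 * d).
        { apply bound_ind; auto. lia. intros k Hk.
          destruct (Nat.eqb_spec k 0).
          - subst k. rewrite Nat.sub_0_r. unfold d.
            assert (Rabs (a 1%nat n) <= u n) by apply Rmax_r. lra.
          - assert (u (n - k)%nat <= f (n - k)%nat) by (apply IH; lia).
            assert (Rabs (a 1%nat (n - k)%nat) <= u (n - k)%nat) by apply Rmax_r. lra. }
        assert (L1 : sum_f_R0 (fun k => w n q k * f k) n
                 = Cc * sum_f_R0 (fun k => w n q k * G alpha (INR k + 1)) n + C0)
          by (apply sum_lin).
        assert (L2 : sum_f_R0 (fun k => w n q k * f (n - k)%nat) n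
                 = Cc * sum_f_R0 (fun k => w n q k * G alpha (INR (n - k) + 1)) n + C0)
          by (apply sum_lin).
        rewrite w_n in B1. rewrite w_0 in B2.
        assert (A := HA i n Hi (Nat.lt_le_incl _ _ Hn)). fold q in A.
        assert (E := HE i n Hi (Nat.lt_le_incl _ _ Hn)).
        assert (T1 := sum_abs n q (fun k => a 0%nat k) Hqi').
        assert (T2 := sum_abs n q (fun k => a 1%nat (n - k)%nat) Hqi').
        cbv beta in T1, T2.
        set (S1 := sum_f_R0 (fun k => w n q k * a 0%nat k) n) in *.
        set (S2 := sum_f_R0 (fun k => w n q k * a 1%nat (n - k)%nat) n) in *.
        set (E1 := sum_f_R0 (fun k => w n q k * G alpha (INR k + 1)) n) in *.
        set (E2 := sum_f_R0 (fun k => w n q k * G alpha (INR (n - k) + 1)) n) in *.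
        set (P := Rpower (INR n + 1) alpha) in *.
        assert (Htri : Rabs (q * S1 + (1 - q) * S2 + eps i n)
                 <= q * Rabs S1 + (1 - q) * Rabs S2 + Rabs (eps i n)).
        { eapply Rle_trans. apply Rabs_triang. eapply Rle_trans.
          apply Rplus_le_compat_r. apply Rabs_triang.
          rewrite !Rabs_mult, (Rabs_pos_eq q), (Rabs_pos_eq (1 - q)) by lra. lra. }
        assert (X1 : q * Rabs S1 <= q * (Cc * E1 + C0 + q ^ n * d))
          by (apply Rmult_le_compat_l; lra).
        assert (X2 : (1 - q) * Rabs S2 <= (1 - q) * (Cc * E2 + C0 + (1 - q) ^ n * d))
          by (apply Rmult_le_compat_l; lra).
        assert (X3 : Cc * (q * E1 + (1 - q) * E2) <= Cc * (G alpha (INR n + 1) - c * P))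
          by (apply Rmult_le_compat_l; lra).
        unfold f. simpl pow. nra. }
      assert (Hc0' := contr_lt1 (p 0%nat 0%nat) n (Hq 0%nat ltac:(lia)) Hn1).
      assert (Hc1' := contr_lt1 (p 1%nat 0%nat) n (Hq 1%nat ltac:(lia)) Hn1).
      assert (S0 := Step 0%nat ltac:(lia)). assert (S1 := Step 1%nat ltac:(lia)).
      assert (P0 : 0 <= p 0%nat 0%nat ^ S n + (1 - p 0%nat 0%nat) ^ S n).
      { assert (H := Hq 0%nat ltac:(lia)). apply Rplus_le_le_0_compat; apply pow_le; lra. }
      assert (P1 : 0 <= p 1%nat 0%nat ^ S n + (1 - p 1%nat 0%nat) ^ S n).
      { assert (H := Hq 1%nat ltac:(lia)). apply Rplus_le_le_0_compat; apply pow_le; lra. }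
      assert (d <= 0).
      { assert (Hd : d = u n - f n) by reflexivity.
        assert (Hu : u n = Rabs (a 0%nat n) \/ u n = Rabs (a 1%nat n)).
        { unfold u. apply Rmax_case; auto. }
        clearbody d. destruct Hu as [Hu|Hu]; rewrite Hu in Hd; nra. }
      unfold d in H. lra. }
  intros i Hi.
  assert (Hai : forall n, Rabs (a i n) <= f n).
  { intros n. eapply Rle_trans; [|apply Hclaim]. unfold u.
    destruct i as [|[|i]]; [apply Rmax_l | apply Rmax_r | lia]. }
  split; [|split].
  - intros Hal. exists (Rmax C0 0), 0%nat. intros n _.
    rewrite Rabs_R1, Rmult_1_r. eapply Rle_trans. apply Hai. unfold f.
    assert (G alpha (INR n + 1) <= 0).
    { unfold G. destruct (Req_dec_T alpha 0). lra.
      assert (/ alpha < 0) by (apply Rinv_lt_0_compat; auto).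
      assert (HP := Rpower_pos (INR n + 1) alpha). unfold Rdiv. nra. }
    assert (C0 <= Rmax C0 0) by apply Rmax_l. nra.
  - intros Hal. exists (Cc / alpha * Rpower 2 alpha + Rabs C0), 1%nat. intros n Hn.
    apply le_INR in Hn. simpl INR in Hn.
    rewrite (Rabs_pos_eq (Rpower (INR n) alpha)) by (left; apply Rpower_pos).
    eapply Rle_trans. apply Hai. unfold f, G. destruct (Req_dec_T alpha 0). lra.
    assert (R1 : Rpower (INR n + 1) alpha <= Rpower 2 alpha * Rpower (INR n) alpha).
    { rewrite Rpower_mult_distr by lra. unfold Rpower. apply exp_le'.
      apply Rmult_le_compat_l. lra. apply ln_le'; lra. }
    assert (R2 : 1 <= Rpower (INR n) alpha).
    { unfold Rpower. rewrite <- exp_0. apply exp_le'.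
      assert (0 <= ln (INR n)) by (rewrite <- ln_1; apply ln_le'; lra). nra. }
    assert (Hia : 0 < / alpha) by (apply Rinv_0_lt_compat; lra).
    assert (Cc * / alpha * Rpower (INR n + 1) alpha
            <= Cc * / alpha * (Rpower 2 alpha * Rpower (INR n) alpha)).
    { apply Rmult_le_compat_l; auto. apply Rmult_le_pos; lra. }
    assert (C0 <= Rabs C0) by apply Rle_abs.
    assert (0 <= Rabs C0) by apply Rabs_pos.
    unfold Rdiv in *. nra.
  - intros Hal. subst alpha.
    assert (Hl2 : / 2 < ln 2) by apply ln_lt_2.
    exists (2 * Cc + Rabs C0 / ln 2), 2%nat. intros n Hn.
    apply le_INR in Hn. simpl INR in Hn. replace (1 + 1) with 2 in Hn by ring.
    assert (Hln : ln 2 <= ln (INR n)) by (apply ln_le'; lra).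
    rewrite (Rabs_pos_eq (ln (INR n))) by lra.
    eapply Rle_trans. apply Hai. unfold f, G. destruct (Req_dec_T 0 0); [|lra].
    assert (R1 : ln (INR n + 1) <= 2 * ln (INR n)).
    { replace (2 * ln (INR n)) with (ln (INR n * INR n)) by (rewrite ln_mult by lra; ring).
      apply ln_le'; nra. }
    assert (C0 <= Rabs C0) by apply Rle_abs.
    assert (Rabs C0 <= Rabs C0 / ln 2 * ln (INR n)).
    { replace (Rabs C0) with (Rabs C0 / ln 2 * ln 2) at 1 by (field; lra).
      apply Rmult_le_compat_l; auto. apply Rmult_le_pos. apply Rabs_pos.
      left; apply Rinv_0_lt_compat; lra. }
    nra.
Qed.
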